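(* Let $\alpha=2\sqrt7-4$. Fix $\varepsilon>0$ and let $\delta=3\varepsilon/8$. For every balanced tetrahedral erasure channel $W$ with $Q(W)\le\alpha-\varepsilon$, we have $Q(W^{s})\ge Q(W)\bigl(1+H(W)\delta\bigr)$ and $Q(W^{p})\ge Q(W)\bigl(1+(1-H(W))\delta\bigr)$.
   Context: $\mathrm{TEC}(p,q,r,s,t)$ denotes a tetrahedral erasure channel with parameters $p,q,r,s,t\ge0$ summing to $1$. Its entropy is $H=\frac{q+r+s}{2}+t$, its edge mass is $E=q+r+s$, and its Quetelet index is $Q=E/(H(1-H))$ (defined when $0<H<1$). It is balanced if $q=r=s$. For $W=\mathrm{TEC}(p,q,r,s,t)$, the serial child is $W^{s}=\mathrm{TEC}(p^2,\ ps+sq+qp,\ pq+qr+rp,\ pr+rs+sp,\ 1-\text{(sum of the other four)})$ and the parallel child is $W^{p}=\mathrm{TEC}(1-\text{(sum of the other four)},\ ts+sq+qt,\ tq+qr+rt,\ tr+rs+st,\ t^2)$. *)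

(* Defs.v *)
From HB Require Import structures.
From mathcomp Require Import all_boot all_order all_algebra.
Set Implicit Arguments. Unset Strict Implicit. Unset Printing Implicit Defensive.
Import Order.TTheory GRing.Theory Num.Theory.
Local Open Scope ring_scope.

Record tec (R : rcfType) := TEC { tp : R; tq : R; tr : R; ts : R; tt : R }.

Section TEC.
Variable R : rcfType.
Implicit Types W : tec R.

Definition is_tec W : Prop :=
  [/\ 0 <= tp W, 0 <= tq W, 0 <= tr W, 0 <= ts W & 0 <= tt W]
  /\ tp W + tq W + tr W + ts W + tt W = 1.

Definition tec_H W : R := (tq W + tr W + ts W) / 2 + tt W.
Definition tec_E W : R := tq W + tr W + ts W.
(* Quetelet index (meaningful when 0 < H < 1). *)
Definition tec_Q W : R := tec_E W / (tec_H W * (1 - tec_H W)).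

Definition balanced W : Prop := tq W = tr W /\ tr W = ts W.

Definition serial_child W : tec R :=
  let p := tp W in let q := tq W in let r := tr W in let s := ts W in
  let p' := p ^+ 2 in
  let q' := p * s + s * q + q * p in
  let r' := p * q + q * r + r * p in
  let s' := p * r + r * s + s * p in
  TEC p' q' r' s' (1 - (p' + q' + r' + s')).

Definition parallel_child W : tec R :=
  let q := tq W in let r := tr W in let s := ts W in let t := tt W in
  let q' := t * s + s * q + q * t in
  let r' := t * q + q * r + r * t in
  let s' := t * r + r * s + s * t in
  let t' := t ^+ 2 in
  TEC (1 - (q' + r' + s' + t')) q' r' s' t'.

Definition alpha : R := 2 * Num.sqrt 7 - 4.
End TEC.

(* Main.v *)
Require Import Defs.
From HB Require Import structures.
From mathcomp Require Import all_boot all_order all_algebra.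
From mathcomp Require Import ring lra.
Import Order.TTheory GRing.Theory Num.Theory.
Local Open Scope ring_scope.
Lemma key1 (R : rcfType) (k eps : R) : 0 <= k -> 0 < eps ->
  k <= 2 * Num.sqrt 7 - 4 - eps -> 9 * eps <= 12 - 8 * k - k ^+ 2.
Proof.
move=> k0 e0 hk.
move: hk; have s0 := sqrtr_ge0 (7:R); have s2 : (Num.sqrt (7:R)) ^+ 2 = 7 by rewrite sqr_sqrtr.
move: s0 s2; move: (Num.sqrt (7:R)) => s s0 s2 hk.
have s25 : 5 <= 2 * s by nra.
have -> : 12 - 8 * k - k ^+ 2 = (2*s - 4 - k) * (k + 4 + 2 * s) by nra.
nra.
Qed.

Lemma key2 (R : rcfType) (h k eps : R) : 0 < h < 1 -> 0 <= k -> 0 < eps ->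
  k <= 2 * Num.sqrt 7 - 4 - eps ->
  (1 + h * (3 * eps / 8)) * (2 - h + (1-h)^+2 * k^+2 * h / 12) <= 2 * (1 - k * h / 3).
Proof.
move=> /andP[h0 h1] k0 e0 hk.
have K := @key1 R k eps k0 e0 hk.
set d := 3 * eps / 8.
have hk2 : k ^+ 2 <= 12 by nra.
have a2 : (1-h)^+2 <= 1 by nra.
have G : d * (2 - h + (1-h)^+2 * k^+2 * h / 12) <= 1 - 2 * k / 3 - (1-h)^+2 * k^+2 / 12.
  have : (1-h)^+2 * k^+2 <= k^+2 by nra.
  have : (1-h)^+2 * k^+2 * h <= 12 * h by nra.
  rewrite /d; nra.
rewrite -subr_ge0.
have -> : 2 * (1 - k * h / 3) - (1 + h * d) * (2 - h + (1-h)^+2 * k^+2 * h / 12)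
  = h * ((1 - 2 * k / 3 - (1-h)^+2 * k^+2 / 12) - d * (2 - h + (1-h)^+2 * k^+2 * h / 12)) by rewrite /d; field.
by apply: mulr_ge0; lra.
Qed.

Lemma core (R : rcfType) (h k eps : R) : 0 < h < 1 -> 0 <= k -> 0 < eps ->
  k <= 2 * Num.sqrt 7 - 4 - eps ->
  k * (1 + h * (3 * eps / 8)) <=
  (2 * (k * (1-h) * h) * ((1-h) - (k * (1-h) * h) / 3)) /
  ((1 - (1-h)^+2 + (k * (1-h) * h)^+2 / 12) * ((1-h)^+2 - (k * (1-h) * h)^+2 / 12)).
Proof.
move=> hh k0 e0 hk.
have K2 := @key2 R h k eps hh k0 e0 hk.
have K := @key1 R k eps k0 e0 hk.
move: hh => /andP[h0 h1].
set d := 3 * eps / 8 in K2 *.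
set A := 2 - h + (1-h)^+2 * k^+2 * h / 12 in K2.
set B := 1 - k^+2 * h^+2 / 12.
have hk2 : k ^+ 2 < 12 by nra.
have kk : 0 <= k^+2 by apply: exprn_ge0.
have hh2 : h^+2 <= 1 by nra.
have kh : k^+2 * h^+2 <= k^+2 by have := ler_wpM2l kk hh2; rewrite mulr1.
have kh0 : 0 <= k^+2 * h^+2 by apply: mulr_ge0 => //; apply: exprn_ge0; lra.
have B0 : 0 < B by rewrite /B; lra.
have B1 : B <= 1 by rewrite /B; lra.
have ak : 0 <= (1-h)^+2 * k^+2 * h by apply: mulr_ge0; [apply: mulr_ge0 => //; apply: exprn_ge0; lra | lra].
have A0 : 1 < A by rewrite /A; lra.
have e1 : 1 - (1-h)^+2 + (k * (1-h) * h)^+2 / 12 = h * A by rewrite /A; field.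
have e2 : (1-h)^+2 - (k * (1-h) * h)^+2 / 12 = (1-h)^+2 * B by rewrite /B; field.
have e3 : 2 * (k * (1-h) * h) * ((1-h) - (k * (1-h) * h) / 3) = (k * h * (1-h)^+2) * (2 * (1 - k * h / 3)) by field.
rewrite e1 e2 e3 ler_pdivlMr; last first.
  apply: mulr_gt0; apply: mulr_gt0 => //; [lra | apply: exprn_gt0; lra].
have -> : k * (1 + h * d) * (h * A * ((1 - h) ^+ 2 * B)) = (k * h * (1-h)^+2) * ((1 + h * d) * A * B) by ring.
apply: ler_wpM2l.
  apply: mulr_ge0; [apply: mulr_ge0 => //; lra | apply: exprn_ge0; lra].
apply: le_trans K2.
have : 0 <= (1 + h * d) * A by apply: mulr_ge0; [rewrite /d; nra | lra].
nra.
Qed.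

Theorem mainTheorem6 (R : rcfType) (eps : R) (Heps : 0 < eps) (W : tec R) :
  is_tec W -> balanced W ->
  0 < tec_H W < 1 ->
  tec_Q W <= alpha R - eps ->
  let delta := 3 * eps / 8 in
  tec_Q W * (1 + tec_H W * delta) <= tec_Q (serial_child W) /\
  tec_Q W * (1 + (1 - tec_H W) * delta) <= tec_Q (parallel_child W).
Proof.
move=> [[p0 q0 r0 s0 t0] hsum] [hqr hrs] hH hQ delta.
have hQ2 : tec_Q W <= 2 * Num.sqrt 7 - 4 - eps by exact: hQ.
clear hQ; rewrite /delta; clear delta.
move: hsum hqr hrs hH hQ2.
rewrite /tec_Q /tec_E /tec_H /serial_child /parallel_child /=.
case: W p0 q0 r0 s0 t0 => p q r s t /= p0 q0 r0 s0 t0 hsum hqr hrs.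
rewrite /tec_Q /tec_E /tec_H /=.
subst r s.
have hp : p = 1 - 3 * q - t by lra.
subst p.
set h := (q + q + q) / 2 + t.
set k := (q + q + q) / (h * (1 - h)).
move=> hH hk.
have /andP[h0 h1] := hH.
have hne : h * (1 - h) != 0 by apply/lt0r_neq0/mulr_gt0; lra.
have ek : q + q + q = k * (1 - h) * h.
  have hn1 : h != 0 by apply/lt0r_neq0.
  have hn2 : 1 - h != 0 by apply/lt0r_neq0; lra.
  by rewrite /k; field; rewrite hn1 hn2.
have k0 : 0 <= k by apply: divr_ge0; [lra | apply: mulr_ge0; lra].
split.

- apply: (le_trans (@core R h k eps hH k0 Heps hk)); rewrite le_eqVlt; apply/orP; left; apply/eqP.
  rewrite -ek; congr (_ / (_ * _)); by rewrite /h; field.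
- have hH2 : 0 < 1 - h < 1.
    by apply/andP; split; lra.
  apply: (le_trans (@core R (1 - h) k eps hH2 k0 Heps hk)); rewrite le_eqVlt; apply/orP; left; apply/eqP.
  have ek2 : k * (1 - (1 - h)) * (1 - h) = q + q + q by rewrite ek; ring.
  rewrite ek2 [X in _ / X]mulrC; congr (_ / (_ * _)); by rewrite /h; field.
Qed.
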